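(* Let $n\ge2$. The space $\mathrm{SL}(n,\mathbb R)/\mathrm{SL}(n,\mathbb Z)$ contains pairs of points which are not midpoint blockable. In particular, no point $m\in\mathrm{SL}(n,\mathbb R)/\mathrm{SL}(n,\mathbb Z)$ is midpoint blockable away from itself.
   Context: For a connected Lie group $G$ with Lie algebra $\mathfrak g$, lattice $\Gamma$, $M=G/\Gamma$: connecting curves for $m_1,m_2$ are $c(t)=\exp(tx)\cdot m_1$, $0\le t\le1$, $x\in\mathfrak g$, with $c(0)=m_1,c(1)=m_2$. The pair $m_1,m_2$ is midpoint blockable if $\{c(1/2): c \text{ a connecting curve}\}$ is finite; $m$ is midpoint blockable away from itself if the pair $m,m$ is midpoint blockable. *)

(* Defs.v *)
From HB Require Import structures.
From mathcomp Require Import all_boot all_order all_algebra.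
From mathcomp Require Import all_classical all_reals all_analysis.
Set Implicit Arguments. Unset Strict Implicit. Unset Printing Implicit Defensive.
Import Order.TTheory GRing.Theory Num.Theory numFieldNormedType.Exports.
Local Open Scope ring_scope.

(* Matrix exponential, defined entrywise as the limit of the partial sums
   of the exponential series  sum_k X^k / k!  (the series always converges). *)
Definition expm (R : realType) (n : nat) (X : 'M[R]_n) : 'M[R]_n :=
  \matrix_(i, j) limn (fun N : nat => ((\sum_(k < N) (k`!%:R)^-1 *: X ^+ k) i j : R^o)).

Definition in_SLR (R : realType) (n : nat) (g : 'M[R]_n) : Prop := \det g = 1.

Definition in_slR (R : realType) (n : nat) (x : 'M[R]_n) : Prop := \tr x = 0.

Definition in_SLZ (R : realType) (n : nat) (g : 'M[R]_n) : Prop :=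
  (forall i j, g i j \is a Num.int) /\ \det g = 1.

(* g SL(n,Z) = h SL(n,Z) as points of SL(n,R)/SL(n,Z) *)
Definition same_coset (R : realType) (n : nat) (g h : 'M[R]_n) : Prop :=
  in_SLZ (invmx g *m h).

(* x in sl(n,R) gives a connecting curve t |-> exp(tx) g1 Gamma from g1 Gamma
   to g2 Gamma *)
Definition connecting (R : realType) (n : nat) (g1 g2 x : 'M[R]_n) : Prop :=
  in_slR x /\ same_coset (expm x *m g1) g2.

(* the pair g1 Gamma, g2 Gamma is midpoint blockable: the set of midpoints
   c(1/2) = exp(x/2) g1 Gamma of connecting curves is a finite subset of
   SL(n,R)/SL(n,Z), i.e. it is covered by finitely many cosets *)
Definition midpoint_blockable (R : realType) (n : nat) (g1 g2 : 'M[R]_n) : Prop :=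
  exists s : seq 'M[R]_n,
    forall x, connecting g1 g2 x ->
      exists2 h, h \in s & same_coset (expm ((2%:R)^-1 *: x) *m g1) h.

Definition midpoint_blockable_away_from_itself (R : realType) (n : nat)
  (g : 'M[R]_n) : Prop := midpoint_blockable g g.

(* Main.v *)
Require Import Defs.
From mathcomp Require Import all_boot all_order all_algebra.
From mathcomp Require Import all_classical all_reals all_analysis.
From mathcomp Require Import ring.
From mathcomp Require Import zify.
Import Order.TTheory GRing.Theory Num.Theory numFieldNormedType.Exports.

Local Open Scope ring_scope.

Section I.
Variable R : realType.

Definition intmx {m} (A : 'M[R]_m) := forall i j, A i j \is a Num.int.

Lemma det_int m (A : 'M[R]_m) : intmx A -> \det A \is a Num.int.
Proof.
move=> hA; rewrite /determinant; apply: rpred_sum => s _.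
apply: rpredM; first by apply: rpredX; rewrite rpredN rpred1.
by apply: rpred_prod => i _; apply: hA.
Qed.

Lemma inv_int m (A : 'M[R]_m) : in_SLZ A -> intmx (invmx A).
Proof.
move=> [hA hd] i j; rewrite /invmx; case: ifP => _; last exact: hA.
rewrite hd invr1 scale1r !mxE /cofactor.
apply: rpredM; first by apply: rpredX; rewrite rpredN rpred1.
by apply: det_int => i' j'; rewrite !mxE.
Qed.

Lemma mul_int m (A B : 'M[R]_m) : intmx A -> intmx B -> intmx (A *m B).
Proof.
move=> hA hB i j; rewrite !mxE; apply: rpred_sum => k _; exact: rpredM.
Qed.

End I.
Arguments intmx {R m}.
Arguments inv_int {R m A}.
Arguments mul_int {R m A B}.
Arguments det_int {R m A}.
Section S.
Variables (R : realType) (n : nat).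
Local Notation M := 'M[R]_(n.+2).

Definition mx2 (a b c d : R) : 'M[R]_2 := \matrix_(i < 2, j < 2)
  if (i == 0 :> nat) then (if (j == 0 :> nat) then a else b)
  else (if (j == 0 :> nat) then c else d).

Lemma mx2_mul a b c d a' b' c' d' :
  mx2 a b c d *m mx2 a' b' c' d' =
  mx2 (a * a' + b * c') (a * b' + b * d') (c * a' + d * c') (c * b' + d * d').
Proof.
apply/matrixP => i j; rewrite !mxE !big_ord_recl big_ord0 !mxE /= addr0.
by case: i => [[|[|i]] Hi] //; case: j => [[|[|j]] Hj].
Qed.

Lemma mx2_add a b c d a' b' c' d' :
  mx2 a b c d + mx2 a' b' c' d' = mx2 (a + a') (b + b') (c + c') (d + d').
Proof.
apply/matrixP => i j; rewrite !mxE.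
by case: i => [[|[|i]] Hi] //; case: j => [[|[|j]] Hj].
Qed.

Lemma mx2_scale k a b c d : k *: mx2 a b c d = mx2 (k * a) (k * b) (k * c) (k * d).
Proof.
apply/matrixP => i j; rewrite !mxE.
by case: i => [[|[|i]] Hi] //; case: j => [[|[|j]] Hj].
Qed.

Lemma mx2_1 : (1 : 'M[R]_2) = mx2 1 0 0 1.
Proof.
apply/matrixP => i j; rewrite !mxE.
by case: i => [[|[|i]] Hi] //; case: j => [[|[|j]] Hj].
Qed.

Lemma mx2_0 : (0 : 'M[R]_2) = mx2 0 0 0 0.
Proof.
apply/matrixP => i j; rewrite !mxE.
by case: i => [[|[|i]] Hi] //; case: j => [[|[|j]] Hj].
Qed.

Lemma mx2_tr a b c d : \tr (mx2 a b c d) = a + d.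
Proof. by rewrite /mxtrace !big_ord_recl big_ord0 !mxE /= addr0. Qed.

Lemma mx2_eq a b c d a' b' c' d' : a = a' -> b = b' -> c = c' -> d = d' ->
  mx2 a b c d = mx2 a' b' c' d'.
Proof. by move=> -> -> -> ->. Qed.

Definition bd (A : 'M[R]_2) (B : 'M[R]_n) : M := block_mx A 0 0 B.

Lemma bd_mul A B A' B' : bd A B * bd A' B' = bd (A *m A') (B *m B').
Proof.
rewrite -mulmxE /bd; rewrite (mulmx_block A 0 0 B A' 0 0 B').
by rewrite !mulmx0 !mul0mx !addr0 !add0r.
Qed.

Lemma bd_add A B A' B' : bd A B + bd A' B' = bd (A + A') (B + B').
Proof. by rewrite /bd (add_block_mx A 0 0 B A' 0 0 B') !addr0. Qed.

Lemma bd_scale k A B : k *: bd A B = bd (k *: A) (k *: B).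
Proof. by rewrite /bd (scale_block_mx k A 0 0 B) !scaler0. Qed.

Lemma bd1 : (1 : M) = bd 1 1.
Proof. by rewrite /bd -scalar_mx_block. Qed.

Lemma bd0 : (0 : M) = bd 0 0.
Proof. by rewrite /bd block_mx0. Qed.

Lemma bd_opp A B : - bd A B = bd (- A) (- B).
Proof. by rewrite -scaleN1r bd_scale !scaleN1r. Qed.


Lemma bd_expr A B k : bd A B ^+ k = bd (A ^+ k) (B ^+ k).
Proof.
elim: k => [|k IH]; first by rewrite !expr0 bd1.
by rewrite !exprS IH bd_mul !mulmxE.
Qed.

Definition J2 := mx2 0 (-1) 1 0.

Lemma J2_even m : J2 ^+ (m.*2) = mx2 ((-1)^+m) 0 0 ((-1)^+m).
Proof.
elim: m => [|m IH].
  by rewrite !expr0; exact: mx2_1.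
rewrite doubleS !exprS IH -!mulmxE /J2 !mx2_mul.
by apply: mx2_eq; rewrite ?exprS; ring.
Qed.

Lemma J2_odd m : J2 ^+ (m.*2.+1) = mx2 0 (-(-1)^+m) ((-1)^+m) 0.
Proof.
rewrite exprS J2_even -!mulmxE /J2 !mx2_mul.
by apply: mx2_eq; ring.
Qed.

Definition Jm : M := bd J2 0.

Lemma term_eq t k : (k`!%:R)^-1 *: (t *: Jm) ^+ k =
  bd (mx2 (cos_coeff t k) (- sin_coeff t k) (sin_coeff t k) (cos_coeff t k))
     ((k == 0)%:R *: (1%:M : 'M[R]_n)).
Proof.
rewrite exprZn /Jm bd_expr !bd_scale.
have -> : (k`!%:R^-1 *: (t ^+ k *: (0 : 'M[R]_n) ^+ k)) = (k == 0)%:R *: 1%:M.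
  rewrite expr0n; case: k => [|k].
    by rewrite /= expr0 invr1 !scale1r.
  by rewrite /= !scaler0 scale0r.
have -> : k`!%:R^-1 *: (t ^+ k *: J2 ^+ k) =
  mx2 (cos_coeff t k) (- sin_coeff t k) (sin_coeff t k) (cos_coeff t k); last by [].
have [m [->|->]] : exists m, k = m.*2 \/ k = m.*2.+1.
  have := odd_double_half k; case: (odd k) => /= E; exists k./2.
    by right; rewrite -{1}E add1n.
  by left; rewrite -{1}E add0n.
- rewrite J2_even !mx2_scale sin_coeff_even; apply: mx2_eq;
    rewrite /cos_coeff /= ?odd_double /= ?doubleK -?exprnP; ring.
- rewrite J2_odd !mx2_scale; apply: mx2_eq;
    rewrite /cos_coeff /sin_coeff /= ?odd_double /= ?doubleK -?exprnP; ring.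
Qed.

Lemma bd_eq A B A' B' : A = A' -> B = B' -> bd A B = bd A' B'.
Proof. by move=> -> ->. Qed.

Definition uS (N : nat) : R := \sum_(k < N) (k == 0%N :> nat)%:R.
Definition cS t (N : nat) : R := \sum_(k < N) cos_coeff t k.
Definition sS t (N : nat) : R := \sum_(k < N) sin_coeff t k.

Lemma psum t N : \sum_(k < N) (k`!%:R)^-1 *: (t *: Jm) ^+ k =
  bd (mx2 (cS t N) (- sS t N) (sS t N) (cS t N)) (uS N *: (1%:M : 'M[R]_n)).
Proof.
rewrite /uS /cS /sS; elim: N => [|N IH].
  by rewrite !big_ord0 bd0 mx2_0 scale0r oppr0.
rewrite !big_ord_recr /= IH term_eq bd_add mx2_add scalerDl.
by apply: bd_eq => //; apply: mx2_eq => //; ring.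
Qed.

Lemma conjX (C X : M) k : C \is a GRing.unit ->
  (C * X * C^-1) ^+ k = C * X ^+ k * C^-1.
Proof.
move=> hC; elim: k => [|k IH]; first by rewrite !expr0 mulr1 mulrV.
by rewrite exprS IH -!mulrA (mulKr hC) exprS -!mulrA.
Qed.

Lemma decomp (C : M) u c s :
  C * bd (mx2 c (- s) s c) (u *: (1%:M : 'M[R]_n)) * C^-1 =
  u *: (C * bd 0 1%:M * C^-1) + c *: (C * bd 1 0 * C^-1) + s *: (C * Jm * C^-1).
Proof.
rewrite (_ : bd (mx2 c (- s) s c) (u *: 1%:M) = u *: bd 0 1%:M + c *: bd 1 0 + s *: Jm).
  by rewrite !mulrDr !mulrDl -!scalerAr -!scalerAl.
rewrite /Jm !bd_scale !bd_add mx2_1 mx2_0 /J2 !mx2_scale !mx2_add !scaler0.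
by apply: bd_eq; [apply: mx2_eq; ring | rewrite !addr0].
Qed.

Lemma cvg_uS : (uS @ \oo --> (1 : R))%classic.
Proof.
apply: cvg_near_cst; near=> N.
have hN : (0 < N)%N by near: N; exists 1%N.
by rewrite /uS -(prednK hN) big_ord_recl /= big1 ?addr0 // => i _; rewrite lift0.
Unshelve. all: end_near.
Qed.

Lemma cvg_cS t : (cS t @ \oo --> cos t)%classic.
Proof.
rewrite (_ : cS t = series (cos_coeff t)); last first.
  by apply/funext => N; rewrite /series /cS /= big_mkord.
rewrite cos.unlock; exact: is_cvg_series_cos_coeff.
Qed.

Lemma cvg_sS t : (sS t @ \oo --> sin t)%classic.
Proof.
rewrite (_ : sS t = series (sin_coeff t)); last first.
  by apply/funext => N; rewrite /series /sS /= big_mkord.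
rewrite sin.unlock; exact: is_cvg_series_sin_coeff.
Qed.

Lemma lim3 t (a b d : R) :
  limn (fun N => (uS N * a + cS t N * b + sS t N * d : R^o)) = a + cos t * b + sin t * d.
Proof.
apply: cvg_lim => //.
have -> : a + cos t * b + sin t * d = 1 * a + cos t * b + sin t * d by rewrite mul1r.
apply: (@cvgD _ R^o _ _ _ (fun N => uS N * a + cS t N * b) (fun N => sS t N * d)).
  apply: (@cvgD _ R^o _ _ _ (fun N => uS N * a) (fun N => cS t N * b)).
    exact: (@cvgMr_tmp R _ _ _ _ _ a cvg_uS).
  exact: (@cvgMr_tmp R _ _ _ _ _ b (cvg_cS t)).
exact: (@cvgMr_tmp R _ _ _ _ _ d (cvg_sS t)).
Qed.


Lemma expm_conj (C : M) t : C \is a GRing.unit ->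
  expm (C * (t *: Jm) * C^-1) =
  C * bd (mx2 (cos t) (- sin t) (sin t) (cos t)) 1%:M * C^-1.
Proof.
move=> hC.
have E N : \sum_(k < N) (k`!%:R)^-1 *: (C * (t *: Jm) * C^-1) ^+ k =
    C * (\sum_(k < N) (k`!%:R)^-1 *: (t *: Jm) ^+ k) * C^-1.
  rewrite mulr_sumr mulr_suml; apply: eq_bigr => k _.
  by rewrite conjX // -scalerAr -scalerAl.
apply/matrixP => i j; rewrite /expm mxE.
have := decomp C 1 (cos t) (sin t); rewrite scale1r => ->.
set A := C * bd 0 1%:M * C^-1.
set B := C * bd 1 0 * C^-1.
set D := C * Jm * C^-1.
rewrite !mxE mul1r -(lim3 t); congr (limn _); apply/funext => N.
by rewrite E psum decomp -/A -/B -/D !mxE.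
Qed.


Definition Rot t := bd (mx2 (cos t) (- sin t) (sin t) (cos t)) (1%:M : 'M[R]_n).
Definition Ha (a : R) := bd (mx2 a 0 0 a^-1) (1%:M : 'M[R]_n).
Definition Ma (a : R) := bd (mx2 0 (- (a * a)) (a * a)^-1 0) (1%:M : 'M[R]_n).
Definition Dg (a b : R) :=
  bd (mx2 ((b * b) / (a * a)) 0 0 ((a * a) / (b * b))) (1%:M : 'M[R]_n).

Lemma unit_of (A B : M) : A * B = 1 -> A \is a GRing.unit.
Proof.
move=> h; have [] := @mulmx1_unit _ _ A B; last by [].
by rewrite mulmxE h.
Qed.

Lemma Ha_mulV a : a != 0 -> Ha a * Ha a^-1 = 1.
Proof.
move=> ha; rewrite /Ha bd_mul mx2_mul mul1mx bd1 mx2_1.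
by apply: bd_eq => //; apply: mx2_eq; field.
Qed.

Lemma Ha_unit a : a != 0 -> Ha a \is a GRing.unit.
Proof. by move=> ha; apply: (@unit_of _ (Ha a^-1)); rewrite Ha_mulV. Qed.

Lemma Ha_inv a : a != 0 -> (Ha a)^-1 = Ha a^-1.
Proof.
move=> ha; by rewrite -[RHS](mulKr (Ha_unit _ ha)) Ha_mulV // mulr1.
Qed.

Lemma HaRot a t : a != 0 -> Ha a * Rot t * (Ha a)^-1 =
  bd (mx2 (cos t) (- (a * a) * sin t) ((a * a)^-1 * sin t) (cos t)) (1%:M : 'M[R]_n).
Proof.
move=> ha; rewrite Ha_inv // /Ha /Rot !bd_mul !mx2_mul !mul1mx.
by apply: bd_eq => //; apply: mx2_eq; field.
Qed.

Lemma HaRot_pihalf a : a != 0 -> Ha a * Rot (pi / 2) * (Ha a)^-1 = Ma a.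
Proof.
move=> ha; rewrite HaRot // cos_pihalf sin_pihalf /Ma.
by apply: bd_eq => //; apply: mx2_eq; ring.
Qed.

Lemma Rpi : Rot pi = bd (mx2 (-1) 0 0 (-1)) (1%:M : 'M[R]_n).
Proof. by rewrite /Rot cospi sinpi oppr0. Qed.

Lemma HaRot_pi a : a != 0 -> Ha a * Rot pi * (Ha a)^-1 = Rot pi.
Proof.
move=> ha; rewrite HaRot // Rpi cospi sinpi.
by apply: bd_eq => //; apply: mx2_eq; ring.
Qed.

Lemma Rpi_sq : Rot pi * Rot pi = 1.
Proof.
rewrite Rpi bd_mul mx2_mul mul1mx bd1 mx2_1.
by apply: bd_eq => //; apply: mx2_eq; ring.
Qed.

Lemma Rpi_det : \det (Rot pi) = 1.
Proof.
rewrite Rpi /bd (det_ublock (mx2 (-1) 0 0 (-1)) 0 (1%:M : 'M[R]_n)) det1 mulr1.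
have -> : mx2 (-1) 0 0 (-1) = (-1)%:M.
  apply/matrixP => i j; rewrite !mxE.
  by case: i => [[|[|i]] Hi] //; case: j => [[|[|j]] Hj] //=; rewrite ?mulr1n ?mulr0n.
by rewrite det_scalar sqrrN expr1n.
Qed.

Lemma bd_int (A : 'M[R]_2) (B : 'M[R]_n) : (forall i j, A i j \is a Num.int) -> (forall i j, B i j \is a Num.int) ->
  forall i j, bd A B i j \is a Num.int.
Proof.
move=> hA hB i j; rewrite /bd /block_mx !mxE.
case: (@fintype.split 2 n i) => i'; rewrite !mxE; case: (@fintype.split 2 n j) => j'; rewrite ?mxE // rpred0.
Qed.

Lemma Rpi_int i j : Rot pi i j \is a Num.int.
Proof.
rewrite Rpi; apply: bd_int => i' j'; rewrite !mxE.
- by case: ifP => _; case: ifP => _; rewrite ?rpredN ?rpred0 ?rpred1.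
- exact: natr_int.
Qed.

Lemma MaDg a b : a != 0 -> b != 0 -> Ma b * Dg a b = Ma a.
Proof.
move=> ha hb; rewrite /Ma /Dg bd_mul mx2_mul mul1mx.
have haa : a * a != 0 by rewrite mulf_neq0.
have hbb : b * b != 0 by rewrite mulf_neq0.
apply: bd_eq => //; apply: mx2_eq.
all: by field; rewrite ?ha ?hb.
Qed.

Lemma Ma_unit a : a != 0 -> Ma a \is a GRing.unit.
Proof.
move=> ha; apply: (@unit_of _ (bd (mx2 0 (a * a) (- (a * a)^-1) 0) 1%:M)).
rewrite /Ma bd_mul mx2_mul mul1mx bd1 mx2_1.
by apply: bd_eq => //; apply: mx2_eq; field.
Qed.


Lemma invE (A : M) : invmx A = A^-1. Proof. by []. Qed.

Lemma conj_split (g H Y : M) : g \is a GRing.unit -> H \is a GRing.unit ->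
  g * H * Y * (g * H)^-1 = g * (H * Y * H^-1) * g^-1.
Proof. by move=> gU HU; rewrite invrM // !mulrA. Qed.

Lemma collide (g h : M) a b : \det g = 1 -> a != 0 -> b != 0 ->
  in_SLZ (invmx (g * Ma a) *m h) -> in_SLZ (invmx (g * Ma b) *m h) ->
  intmx (Dg a b).
Proof.
move=> hg ha hb; rewrite !invE !mulmxE.
have gU : g \is a GRing.unit.
  have : g \in unitmx by rewrite unitmxE hg unitr1.
  by [].
set g1 := (g * Ma a)^-1 * h => h1 h2.
have g1U : g1 \is a GRing.unit.
  have : g1 \in unitmx by rewrite unitmxE h1.2 unitr1.
  by [].
have eD : Dg a b = (Ma b)^-1 * Ma a by rewrite -(MaDg _ _ ha hb) mulKr // Ma_unit.
have e : (g * Ma b)^-1 * h = Dg a b * g1.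
  rewrite /g1 mulrA; apply: (congr1 (fun X => X * h)).
  rewrite !invrM ?Ma_unit // eD -mulrA (mulrA (Ma a)) mulrV ?Ma_unit // mul1r.
  by [].
rewrite e in h2.
rewrite -[Dg a b](mulrK g1U) -mulmxE.
apply: mul_int; first exact: h2.1.
exact: inv_int h1.
Qed.

Lemma mid_key (g : M) (s : seq M) : \det g = 1 ->
  (forall x, connecting g g x ->
      exists2 h, h \in s & same_coset (expm ((2%:R)^-1 *: x) *m g) h) ->
  forall a : R, a != 0 -> exists2 h, h \in s & in_SLZ (invmx (g * Ma a) *m h).
Proof.
move=> hg hs a ha.
have gU : g \is a GRing.unit.
  have : g \in unitmx by rewrite unitmxE hg unitr1.
  by [].
have HU := Ha_unit _ ha.
set C := g * Ha a.
have CU : C \is a GRing.unit by rewrite /C unitrMl.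
have RU : Rot pi \is a GRing.unit by apply: (@unit_of _ (Rot pi)); rewrite Rpi_sq.
have [] := hs (C * (pi *: Jm) * C^-1).
  split.
    rewrite /in_slR -mulmxE mxtrace_mulC mulmxE mulrA mulVr // mul1r mxtraceZ.
    by rewrite /Jm /bd (mxtrace_block J2 0 0 0) mx2_tr mxtrace0 !addr0 mulr0.
  rewrite /same_coset expm_conj // -/(Rot pi) /C conj_split // HaRot_pi //.
  rewrite mulmxE mulrVK // invE.
  rewrite invrM // mulrVK //.
  have -> : (Rot pi)^-1 = Rot pi.
    by rewrite -[RHS](mulKr RU) Rpi_sq mulr1.
  by split; [exact: Rpi_int | exact: Rpi_det].
move=> h hin hc; exists h => //.
move: hc; rewrite /same_coset scalerAl scalerAr scalerA expm_conj //.
rewrite -/(Rot _) [_ * pi]mulrC /C conj_split // HaRot_pihalf //.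
by rewrite mulmxE mulrVK.
Qed.

Lemma ratio (p q : R) : 0 < p -> 0 < q -> q / p \is a Num.int -> p / q \is a Num.int ->
  p = q.
Proof.
move=> hp hq h1 h2.
have nz1 : q / p != 0 by rewrite mulf_neq0 ?invr_eq0 ?gt_eqF.
have nz2 : p / q != 0 by rewrite mulf_neq0 ?invr_eq0 ?gt_eqF.
have g1 : 1 <= q / p.
  have e : `|q / p| = q / p by rewrite ger0_norm // divr_ge0 // ltW.
  by rewrite -e; apply: norm_intr_ge1.
have g2 : 1 <= p / q.
  have e : `|p / q| = p / q by rewrite ger0_norm // divr_ge0 // ltW.
  by rewrite -e; apply: norm_intr_ge1.
move: g1 g2; rewrite !ler_pdivlMr // !mul1r => g1 g2.
by apply/eqP; rewrite eq_le g1 g2.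
Qed.

Lemma main_g (g : M) : \det g = 1 -> ~ midpoint_blockable g g.
Proof.
move=> hg [s hs].
pose a (k : nat) : R := (2 ^ k)%:R.
have ha k : a k != 0 by rewrite pnatr_eq0 expn_eq0.
have hF : forall k : 'I_(size s).+1,
    {h | h \in s /\ in_SLZ (invmx (g * Ma (a k)) *m h)}.
  move=> k; apply: cid; have [h ? ?] := mid_key _ _ hg hs _ (ha k); by exists h.
have idx : forall x, x \in s -> (index x s < size s)%N by move=> x; rewrite index_mem.
pose f (k : 'I_(size s).+1) : 'I_(size s) := Ordinal (idx _ (proj1 (svalP (hF k)))).
have : ~~ injectiveb f.
  apply/negP => /injectiveP inj; have := @leq_card _ _ f inj; by rewrite !card_ord ltnn.
case/injectivePn => k [l neq eqf].
have eh : sval (hF k) = sval (hF l).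
  have ei : index (sval (hF k)) s = index (sval (hF l)) s by have := congr1 val eqf.
  rewrite -[LHS](nth_index 0 (proj1 (svalP (hF k)))) ei.
  exact: nth_index (proj1 (svalP (hF l))).
have hk := proj2 (svalP (hF k)).
have hl := proj2 (svalP (hF l)).
rewrite eh in hk.
have hD := collide g _ _ _ hg (ha k) (ha l) hk hl.
have d1 : (a l * a l) / (a k * a k) \is a Num.int.
  by have := hD (@lshift 2 n ord0) (@lshift 2 n ord0); rewrite /Dg /bd (@block_mxEul _ 2 n 2 n) mxE.
have d2 : (a k * a k) / (a l * a l) \is a Num.int.
  have := hD (@lshift 2 n (@Ordinal 2 1 isT)) (@lshift 2 n (@Ordinal 2 1 isT)).
  by rewrite /Dg /bd (@block_mxEul _ 2 n 2 n) mxE.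
have pos m : 0 < a m * a m by rewrite mulr_gt0 // ltr0n expn_gt0.
have := ratio _ _ (pos k) (pos l) d1 d2.
rewrite /a -!natrM => /eqP; rewrite eqr_nat -!expnD eqn_exp2l // => /eqP ekl.
by move/negP: neq; apply; apply/eqP/val_inj => /=; lia.
Qed.


End S.

Theorem proposition6p3 (R : realType) (n : nat) (hn : (2 <= n)%N) :
  (exists g1 g2 : 'M[R]_n, in_SLR g1 /\ in_SLR g2 /\ ~ midpoint_blockable g1 g2) /\
  (forall g : 'M[R]_n, in_SLR g -> ~ midpoint_blockable_away_from_itself g).
Proof.
case: n hn => [|[|n]] // _.
have part2 : forall g : 'M[R]_n.+2, in_SLR g -> ~ midpoint_blockable_away_from_itself g.
  by move=> g hg; exact: (main_g R n g hg).
split => //.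
exists 1, 1; split; first exact: det1.
split; first exact: det1.
exact: part2 _ (det1 _ _).
Qed.
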